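(* Let $m\geq1$ and $n\geq2$. Then the identities satisfied by the semigroup $\mathbb{Z}_m\times N_n^I\times L_2^I\times R_2^I\times A_0^I$ are axiomatized by \[x^{m+n}\approx x^n,\quad x^{m+n-1}yx\approx x^{n-1}yx,\quad x^2yx\approx xyx^2,\quad xyxzx\approx x^2yzx.\]
   Context: $\mathbb{Z}_m$ is the cyclic group of order $m$; $N_n=\langle a\mid a^n=0\rangle$ is the monogenic nilpotent semigroup of order $n$; $L_2$ and $R_2$ are the left zero ($xy=x$) and right zero ($xy=y$) semigroups of order two; $A_0=\langle e,f\mid e^2=e,\ f^2=f,\ ef=0\rangle=\{0,e,f,fe\}$. For a semigroup $S$, $S^I$ is $S$ with an external identity element adjoined. Identities are between words over a countably infinite alphabet of variables. *)

(* Defs.v *)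
From mathcomp Require Import all_boot.
Set Implicit Arguments. Unset Strict Implicit. Unset Printing Implicit Defensive.

(* Variables are natural numbers; a word is a NONEMPTY sequence of variables
   (nonemptiness is imposed where words are used). *)
Definition word := seq nat.

Definition evalw {T : Type} (op : T -> T -> T) (phi : nat -> T) (w : word) : option T :=
  match w with
  | [::] => None
  | a :: s => Some (foldl (fun acc x => op acc (phi x)) (phi a) s)
  end.

Definition satisfies {T : Type} (op : T -> T -> T) (u v : word) : Prop :=
  forall phi : nat -> T, evalw op phi u = evalw op phi v.

Definition wsubst (sigma : nat -> word) (w : word) : word := flatten (map sigma w).

(* Equational (Birkhoff) derivability of u ~ v from a set of semigroup identities
   Ax: the fully invariant congruence on the free semigroup generated by Ax. *)
Inductive derivable (Ax : word -> word -> Prop) : word -> word -> Prop :=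
| der_ax u v : Ax u v -> derivable Ax u v
| der_refl u : derivable Ax u u
| der_sym u v : derivable Ax u v -> derivable Ax v u
| der_trans u v w : derivable Ax u v -> derivable Ax v w -> derivable Ax u w
| der_subst (sigma : nat -> word) u v :
    (forall x, sigma x != [::]) -> derivable Ax u v ->
    derivable Ax (wsubst sigma u) (wsubst sigma v)
| der_mul (w1 w2 : word) u v :
    derivable Ax u v -> derivable Ax (w1 ++ u ++ w2) (w1 ++ v ++ w2).

(* The four identities, with x = 0, y = 1, z = 2:
   x^{m+n} ~ x^n,  x^{m+n-1} y x ~ x^{n-1} y x,  x^2 y x ~ x y x^2,
   x y x z x ~ x^2 y z x. *)
Inductive Ax6p5 (m n : nat) : word -> word -> Prop :=
| ax1 : Ax6p5 m n (nseq (m + n) 0) (nseq n 0)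
| ax2 : Ax6p5 m n (nseq (m + n - 1) 0 ++ [:: 1; 0]) (nseq (n - 1) 0 ++ [:: 1; 0])
| ax3 : Ax6p5 m n [:: 0; 0; 1; 0] [:: 0; 1; 0; 0]
| ax4 : Ax6p5 m n [:: 0; 1; 0; 2; 0] [:: 0; 0; 1; 2; 0].

Lemma Zm_lt (m : nat) (a b : 'I_m) : (a + b) %% m < m.
Proof. by rewrite ltn_pmod // (leq_ltn_trans (leq0n a) (ltn_ord a)). Qed.
Definition Zm_op (m : nat) (a b : 'I_m) : 'I_m := Ordinal (Zm_lt a b).

(* N_n = <a | a^n = 0>: carrier 'I_n, where i < n-1 stands for a^(i+1)
   and n-1 stands for 0 = a^n. *)
Lemma Nn_lt (n : nat) (a b : 'I_n) : minn (a + b).+1 n.-1 < n.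
Proof.
have n0 : 0 < n by rewrite (leq_ltn_trans (leq0n a) (ltn_ord a)).
by rewrite (leq_ltn_trans (geq_minr _ _)) // prednK.
Qed.
Definition Nn_op (n : nat) (a b : 'I_n) : 'I_n := Ordinal (Nn_lt a b).

Definition L2_op (a b : bool) : bool := a.
Definition R2_op (a b : bool) : bool := b.

(* A_0 = <e, f | e^2 = e, f^2 = f, ef = 0> = {0, e, f, fe} *)
Inductive A0 := A0zero | A0e | A0f | A0fe.
Definition A0_op (a b : A0) : A0 :=
  match a, b with
  | A0zero, _ | _, A0zero => A0zero
  | A0e, A0e => A0e
  | A0e, A0f => A0zero
  | A0e, A0fe => A0zero
  | A0f, A0e => A0fe
  | A0f, A0f => A0f
  | A0f, A0fe => A0fe
  | A0fe, A0e => A0fe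
  | A0fe, A0f => A0zero
  | A0fe, A0fe => A0zero
  end.

Definition adjI {T : Type} (op : T -> T -> T) (a b : option T) : option T :=
  match a, b with
  | None, _ => b
  | _, None => a
  | Some x, Some y => Some (op x y)
  end.

Definition S6p5 (m n : nat) : Type :=
  ('I_m * option 'I_n * option bool * option bool * option A0)%type.

Definition S6p5_op (m n : nat) (a b : S6p5 m n) : S6p5 m n :=
  match a, b with
  | (z, p, l, r, e), (z', p', l', r', e') =>
    (Zm_op z z', adjI (@Nn_op n) p p', adjI L2_op l l', adjI R2_op r r',
     adjI A0_op e e')
  end.

Lemma Zm_assoc m : associative (@Zm_op m).
Proof. by move=> a b c; apply: val_inj => /=; rewrite modnDml modnDmr addnA. Qed.
Lemma A0_assoc : associative A0_op.
Proof. by do 3 case. Qed.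
Lemma adjI_assoc T (op : T -> T -> T) : associative op -> associative (adjI op).
Proof. by move=> H [a|] [b|] [c|] //=; rewrite H. Qed.

(* Main.v *)
Require Import Defs.
From mathcomp Require Import all_boot.
From mathcomp Require Import zify.
Set Implicit Arguments. Unset Strict Implicit. Unset Printing Implicit Defensive.

Section Gen.
Variables (T : Type) (op : T -> T -> T).

Lemma evalw_ext (phi psi : nat -> T) w : phi =1 psi -> evalw op phi w = evalw op psi w.
Proof.
move=> e; case: w => //= a s; rewrite e; congr Some.
by elim: s (psi a) => //= b s IH t; rewrite e IH.
Qed.

Lemma evalw_rcons phi s a :
  evalw op phi (rcons s a) =
  Some (match evalw op phi s with Some v => op v (phi a) | None => phi a end).
Proof. by case: s => //= b s; rewrite foldl_rcons. Qed.

Lemma evalw_P phi (P : seq nat -> T -> Prop) :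
  (forall a, P [:: a] (phi a)) ->
  (forall s a v, s != [::] -> P s v -> P (rcons s a) (op v (phi a))) ->
  forall w v, evalw op phi w = Some v -> P w v.
Proof.
move=> H0 HS; elim/last_ind => // s a IH v.
rewrite evalw_rcons; case E: (evalw op phi s) => [t|] [<-].
  apply: HS; last exact: IH.
  by apply/eqP => s0; rewrite s0 in E.
have s0 : s = [::] by move: E; clear IH; case: s.
by rewrite s0; apply: H0.
Qed.

Lemma evalw_hom (C : Type) (opC : C -> C -> C) (f : T -> C) phi w :
  (forall a b, f (op a b) = opC (f a) (f b)) ->
  evalw opC (fun x => f (phi x)) w = omap f (evalw op phi w).
Proof.
move=> hf; case: w => //= a s; congr Some.
elim: s (phi a) => //= b s IH t; by rewrite -hf IH.
Qed.

Hypothesis opA : associative op.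

Lemma foldl_op (phi : nat -> T) t c s :
  foldl (fun acc x => op acc (phi x)) (op t c) s = op t (foldl (fun acc x => op acc (phi x)) c s).
Proof. by elim: s c => //= b s IH c; rewrite -opA IH. Qed.

Lemma evalw_cat phi s1 s2 :
  evalw op phi (s1 ++ s2) = adjI op (evalw op phi s1) (evalw op phi s2).
Proof.
case: s1 => [|a s1] /=; first by case: (evalw op phi s2).
rewrite foldl_cat; case: s2 => //= b s2; by rewrite foldl_op.
Qed.

Lemma evalw_subst phi (sigma : nat -> word) u :
  (forall x, sigma x != [::]) ->
  evalw op phi (wsubst sigma u) =
  evalw op (fun x => match evalw op phi (sigma x) with Some t => t | None => phi 0 end) u.
Proof.
move=> ne; elim: u => // y u IH.
have -> : wsubst sigma (y :: u) = sigma y ++ wsubst sigma u by [].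
rewrite evalw_cat IH (_ : y :: u = [:: y] ++ u) // evalw_cat.
rewrite [evalw _ _ [:: y]]/=.
by case E: (evalw op phi (sigma y)) => //; move: (ne y) E; case: (sigma y).
Qed.

Lemma foldl_nseq (phi : nat -> T) x k t :
  foldl (fun acc y => op acc (phi y)) t (nseq k x) = iter k (fun b => op b (phi x)) t.
Proof. by elim: k t => // k IH t; rewrite iterSr -IH. Qed.

Lemma evalw_nseq (phi : nat -> T) x k s :
  evalw op phi (nseq k.+1 x ++ s) =
  Some (foldl (fun acc y => op acc (phi y)) (iter k (fun b => op b (phi x)) (phi x)) s).
Proof. by rewrite /= foldl_cat foldl_nseq. Qed.

End Gen.

Section CompN.
Variable (n : nat).

Lemma Nn_assoc : associative (@Nn_op n).
Proof.
move=> a b c; apply: val_inj => /=.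
have := ltn_ord a; lia.
Qed.

End CompN.
Section Comp.
Variables (m n : nat).
Lemma L2_assoc : associative L2_op. Proof. by []. Qed.
Lemma R2_assoc : associative R2_op. Proof. by []. Qed.

Lemma S_assoc : associative (@S6p5_op m n).
Proof.
move=> [[[[a1 a2] a3] a4] a5] [[[[b1 b2] b3] b4] b5] [[[[c1 c2] c3] c4] c5] /=.
by rewrite Zm_assoc (adjI_assoc (@Nn_assoc n)) (adjI_assoc L2_assoc) (adjI_assoc R2_assoc) (adjI_assoc A0_assoc).
Qed.

End Comp.
Section CompN2.
Variable (n : nat).
Definition gN (p : option 'I_n) : nat := if p is Some i then i.+1 else 0.

Lemma gN_le p : gN p <= n.
Proof. by case: p => //= i; apply: ltn_ord. Qed.

Lemma gN_op p q : gN (adjI (@Nn_op n) p q) = minn (gN p + gN q) n.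
Proof.
case: p q => [i|] [j|] /=; try (have := ltn_ord i); try (have := ltn_ord j); lia.
Qed.

Lemma gN_inj : injective gN.
Proof.
case=> [i|] [j|] //= [e]; congr Some; exact: val_inj.
Qed.

End CompN2.

Section Ids.
Variables (m n : nat) (hm : 1 <= m) (hn : 2 <= n).

Lemma Zm_iter (a : 'I_m) k : val (iter k (fun b => Zm_op b a) a) = (k.+1 * a) %% m.
Proof.
elim: k => [|k IH] /=; first by rewrite mul1n modn_small.
by rewrite IH modnDml mulSn addnC.
Qed.

Lemma Zm_val (a b : 'I_m) : val (Zm_op a b) = (a + b) %% m.
Proof. by []. Qed.

Lemma Zm_A1 (a : 'I_m) : iter (m + n - 1) (fun b => Zm_op b a) a = iter (n - 1) (fun b => Zm_op b a) a.
Proof.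
apply: val_inj; rewrite /= !Zm_iter.
have -> : (m + n - 1).+1 = m + n by lia.
have -> : (n - 1).+1 = n by lia.
by rewrite mulnDl mulnC modnMDl.
Qed.

Lemma Zm_A2 (a y : 'I_m) :
  Zm_op (Zm_op (iter (m + n - 2) (fun b => Zm_op b a) a) y) a =
  Zm_op (Zm_op (iter (n - 2) (fun b => Zm_op b a) a) y) a.
Proof.
apply: val_inj; rewrite !Zm_val !Zm_iter !modnDml.
have -> : (m + n - 2).+1 = m + (n - 2).+1 by lia.
by rewrite mulnDl mulnC -!addnA modnMDl.
Qed.

Lemma Zm_A3 (a y : 'I_m) :
  Zm_op (Zm_op (Zm_op a a) y) a = Zm_op (Zm_op (Zm_op a y) a) a.
Proof.
apply: val_inj; rewrite !Zm_val; do ! rewrite -?addnA modnDml; congr modn; lia.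
Qed.

Lemma Zm_A4 (a y z : 'I_m) :
  Zm_op (Zm_op (Zm_op (Zm_op a y) a) z) a = Zm_op (Zm_op (Zm_op (Zm_op a a) y) z) a.
Proof.
apply: val_inj; rewrite !Zm_val; do ! rewrite -?addnA modnDml; congr modn; lia.
Qed.

Notation NI := (adjI (@Nn_op n)).

Lemma N_iter (a : option 'I_n) k : gN (iter k (fun b => NI b a) a) = minn (k.+1 * gN a) n.
Proof.
have := gN_le a.
elim: k => [|k IH] /= h; first by lia.
rewrite gN_op IH //; nia.
Qed.

Lemma N_A1 (a : option 'I_n) : iter (m + n - 1) (fun b => NI b a) a = iter (n - 1) (fun b => NI b a) a.
Proof.
apply: gN_inj; rewrite !N_iter.
have := gN_le a; case: (gN a) => [|g] h; first by rewrite !muln0.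
nia.
Qed.

Lemma N_A2 (a y : option 'I_n) :
  NI (NI (iter (m + n - 2) (fun b => NI b a) a) y) a =
  NI (NI (iter (n - 2) (fun b => NI b a) a) y) a.
Proof.
apply: gN_inj; rewrite !gN_op !N_iter.
have := gN_le a; have := gN_le y; case: (gN a) => [|g] h1 h2; first by rewrite !muln0.
nia.
Qed.

Lemma N_A3 (a y : option 'I_n) : NI (NI (NI a a) y) a = NI (NI (NI a y) a) a.
Proof. apply: gN_inj; rewrite !gN_op; lia. Qed.

Lemma N_A4 (a y z : option 'I_n) :
  NI (NI (NI (NI a y) a) z) a = NI (NI (NI (NI a a) y) z) a.
Proof. apply: gN_inj; rewrite !gN_op; lia. Qed.


Lemma idem_iter (T : Type) (op : T -> T -> T) (a : T) k : op a a = a -> iter k (fun b => op b a) a = a.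
Proof. by move=> h; elim: k => //= k ->. Qed.

Lemma A0_iter (a : option A0) k : iter k.+1 (fun b => adjI A0_op b a) a = adjI A0_op a a.
Proof.
elim: k => //= k IH; rewrite IH.
by case: a {IH} => [[]|].
Qed.

Lemma iter_S (x : S6p5 m n) k :
  iter k (fun b => S6p5_op b x) x =
  (iter k (fun b => Zm_op b x.1.1.1.1) x.1.1.1.1,
   iter k (fun b => adjI (@Nn_op n) b x.1.1.1.2) x.1.1.1.2,
   iter k (fun b => adjI L2_op b x.1.1.2) x.1.1.2,
   iter k (fun b => adjI R2_op b x.1.2) x.1.2,
   iter k (fun b => adjI A0_op b x.2) x.2).
Proof.
case: x => [[[[a1 a2] a3] a4] a5] /=.
by elim: k => //= k ->.
Qed.

Lemma S_A1 (x : S6p5 m n) :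
  iter (m + n - 1) (fun b => S6p5_op b x) x = iter (n - 1) (fun b => S6p5_op b x) x.
Proof.
case: x => [[[[a1 a2] a3] a4] a5].
rewrite !iter_S /= Zm_A1 N_A1.
have hL : adjI L2_op a3 a3 = a3 by case: a3.
have hR : adjI R2_op a4 a4 = a4 by case: a4.
rewrite !(@idem_iter _ _ _ _ hL) !(@idem_iter _ _ _ _ hR).
have -> : m + n - 1 = (m + n - 2).+1 by lia.
have -> : n - 1 = (n - 2).+1 by lia.
by rewrite !A0_iter.
Qed.


Notation A := (adjI A0_op).
Lemma A0_sq (a y : option A0) : A (A (A a a) y) a = A (A a y) a.
Proof. by case: a => [[]|]; case: y => [[]|]. Qed.

Lemma S_A2 (x y : S6p5 m n) :
  S6p5_op (S6p5_op (iter (m + n - 2) (fun b => S6p5_op b x) x) y) x =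
  S6p5_op (S6p5_op (iter (n - 2) (fun b => S6p5_op b x) x) y) x.
Proof.
rewrite !iter_S.
case: x => [[[[a1 a2] a3] a4] a5]; case: y => [[[[b1 b2] b3] b4] b5] /=.
rewrite Zm_A2 N_A2.
have hL : adjI L2_op a3 a3 = a3 by case: a3.
have hR : adjI R2_op a4 a4 = a4 by case: a4.
rewrite !(@idem_iter _ _ _ _ hL) !(@idem_iter _ _ _ _ hR).
have -> : m + n - 2 = (m + n - 3).+1 by lia.
rewrite A0_iter A0_sq; case: (n - 2) => [|k]; first by [].
by rewrite A0_iter A0_sq.
Qed.

Lemma S_A3 (x y : S6p5 m n) :
  S6p5_op (S6p5_op (S6p5_op x x) y) x = S6p5_op (S6p5_op (S6p5_op x y) x) x.
Proof.
case: x => [[[[a1 a2] a3] a4] a5]; case: y => [[[[b1 b2] b3] b4] b5] /=.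
rewrite Zm_A3 N_A3; congr (_, _, _, _, _).
- by case: a3 => [[]|]; case: b3 => [[]|].
- by case: a4 => [[]|]; case: b4 => [[]|].
- by case: a5 => [[]|]; case: b5 => [[]|].
Qed.

Lemma S_A4 (x y z : S6p5 m n) :
  S6p5_op (S6p5_op (S6p5_op (S6p5_op x y) x) z) x =
  S6p5_op (S6p5_op (S6p5_op (S6p5_op x x) y) z) x.
Proof.
case: x => [[[[a1 a2] a3] a4] a5]; case: y => [[[[b1 b2] b3] b4] b5].
case: z => [[[[c1 c2] c3] c4] c5] /=.
rewrite Zm_A4 N_A4; congr (_, _, _, _, _).
- by case: a3 => [[]|]; case: b3 => [[]|]; case: c3 => [[]|].
- by case: a4 => [[]|]; case: b4 => [[]|]; case: c4 => [[]|].
- by case: a5 => [[]|]; case: b5 => [[]|]; case: c5 => [[]|].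
Qed.

Lemma Ax_sound u v : Ax6p5 m n u v -> satisfies (@S6p5_op m n) u v.
Proof.
case=> phi.
- have -> : m + n = (m + n - 1).+1 by lia.
  have e : n = (n - 1).+1 by lia.
  rewrite (_ : nseq n 0 = nseq (n - 1).+1 0); last by rewrite -e.
  rewrite -(cats0 (nseq _ 0)) -(cats0 (nseq (n - 1).+1 0)) !evalw_nseq /=.
  by rewrite S_A1.
- have -> : m + n - 1 = (m + n - 2).+1 by lia.
  have -> : n - 1 = (n - 2).+1 by lia.
  by rewrite !evalw_nseq /= S_A2.
- by rewrite /= S_A3.
- by rewrite /= S_A4.
Qed.


Lemma der_sound u v : derivable (Ax6p5 m n) u v -> satisfies (@S6p5_op m n) u v.
Proof.
elim=> {u v}.
- by move=> u v; apply: Ax_sound.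
- by [].
- by move=> u v _ IH phi; rewrite IH.
- by move=> u v w _ IH1 _ IH2 phi; rewrite IH1 IH2.
- move=> sigma u v ne _ IH phi.
  by rewrite !(evalw_subst (@S_assoc m n) _ _ ne) IH.
- move=> w1 w2 u v _ IH phi.
  by rewrite !(evalw_cat (@S_assoc m n)) IH.
Qed.

End Ids.

Definition lp (x : nat) (w : seq nat) := size w - (index x (rev w)).+1.

Lemma lp_rcons (x a : nat) (s : seq nat) : lp x (rcons s a) = if x == a then size s else lp x s.
Proof.
rewrite /lp rev_rcons size_rcons /= eq_sym.
have := index_size x (rev s); rewrite size_rev.
case: (x == a) => /=; lia.
Qed.

Lemma index_rcons (x a : nat) (s : seq nat) :
  index x (rcons s a) = if x \in s then index x s else if x == a then size s else (size s).+1.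
Proof.
rewrite -cats1 index_cat; case: ifP => // _ /=; rewrite eq_sym.
by case: (x == a); rewrite ?addn0 ?addn1.
Qed.

Lemma cnt_rcons (x a : nat) (s : seq nat) : count_mem x (rcons s a) = count_mem x s + (a == x).
Proof. by rewrite -cats1 count_cat /= addn0. Qed.

Lemma cnt_gt0 (x : nat) (s : seq nat) : (0 < count_mem x s) = (x \in s).
Proof. by rewrite -has_count has_pred1. Qed.

Lemma lp_lt (x : nat) (w : seq nat) : x \in w -> lp x w < size w.
Proof. rewrite /lp => h; have : 0 < size w by case: w h. move=> hs; lia. Qed.

Lemma nth_lp (x0 x : nat) (w : seq nat) : x \in w -> nth x0 w (lp x w) = x.
Proof.
move=> h; rewrite /lp -nth_rev; first by rewrite nth_index // mem_rev.
by rewrite -size_rev index_mem mem_rev.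
Qed.

Lemma index_lp (x : nat) (w : seq nat) : x \in w ->
  index x w <= lp x w /\ (1 < count_mem x w -> index x w < lp x w).
Proof.
elim/last_ind: w => // s a IH.
rewrite mem_rcons in_cons lp_rcons index_rcons cnt_rcons.
case: (x =P a) => [->|/eqP ne] /=.
  move=> _; case: ifP => ha.
    have := index_mem a s; rewrite ha => h1.
    by split; [exact: index_size | move=> _].
  move/count_memPn: (negbT ha) => ->.
  by rewrite eqxx; split.
move=> hs; rewrite hs eq_sym (negbTE ne) addn0.
exact: IH.
Qed.

Definition pos (w : seq nat) (e : nat * bool) : nat := if e.2 then lp e.1 w else index e.1 w.
Definition relw (w : seq nat) : rel (nat * bool) := fun a b => pos w a < pos w b.

Lemma relw_tr w : transitive (relw w).
Proof. by move=> y x z; rewrite /relw; apply: ltn_trans. Qed.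
Lemma relw_irr w : irreflexive (relw w).
Proof. by move=> x; rewrite /relw ltnn. Qed.

Fixpoint Er (r : seq nat) : seq (nat * bool) :=
  if r is a :: r' then
    (if a \in rev r' then rcons (rem (a, true) (Er r')) (a, true)
     else rcons (Er r') (a, false))
  else [::].
Definition E (w : seq nat) := Er (rev w).

Lemma E_rcons w a : E (rcons w a) =
  if a \in w then rcons (rem (a, true) (E w)) (a, true) else rcons (E w) (a, false).
Proof. by rewrite /E rev_rcons /= revK. Qed.

Lemma sorted_rcons_lt (T : eqType) (r : rel T) s y :
  sorted r s -> (forall e, e \in s -> r e y) -> sorted r (rcons s y).
Proof.
case: s => //= h t; rewrite rcons_path => -> H /=; apply: H; exact: mem_last.
Qed.

Lemma E_prop w :
  [/\ sorted (relw w) (E w),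
      forall x, ((x, false) \in E w) = (x \in w),
      forall x, ((x, true) \in E w) = (1 < count_mem x w)
    & forall e, e \in E w -> pos w e < size w].
Proof.
elim/last_ind: w => [|w a [So MF MT B]]; first by split.
have U := sorted_uniq (@relw_tr w) (@relw_irr w) So.
rewrite E_rcons; case: ifP => aw.
-
  have posE e : e \in rem (a, true) (E w) -> pos (rcons w a) e = pos w e.
    rewrite (mem_rem_uniq _ U) inE => /andP [ne]; case: e ne => y [] /= ne.
      by rewrite /pos /= MT lp_rcons => _; case: (y =P a) ne => [->|//]; rewrite eqxx.
    by rewrite /pos /= MF index_rcons => ->.
  have remE e : e \in rem (a, true) (E w) -> e \in E w.
    by rewrite (mem_rem_uniq _ U) inE => /andP [].
  have So' : sorted (relw (rcons w a)) (rem (a, true) (E w)).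
    have S1 := subseq_sorted (@relw_tr w) (rem_subseq (a, true) (E w)) So.
    rewrite (@eq_in_sorted _ [in rem (a, true) (E w)] _ (relw w)) //; last first.
      by move=> e1 e2 h1 h2; rewrite /relw !posE.
  split.
  + apply: sorted_rcons_lt => // e he.
    by rewrite /relw posE // {2}/pos /= lp_rcons eqxx; apply: B; apply: remE.
  + move=> x; rewrite mem_rcons in_cons (mem_rem_uniq _ U) inE /= MF mem_rcons in_cons.
    by rewrite !xpair_eqE andbF /=; case: (x =P a) => [->|]; rewrite ?aw.
  + move=> x; rewrite mem_rcons in_cons (mem_rem_uniq _ U) inE /= MT cnt_rcons xpair_eqE andbT.
    case: eqP => [->|ne] /=; last by rewrite eq_sym; move/eqP: ne => /negbTE ->; rewrite addn0.
    by rewrite eqxx addn1 ltnS; move: aw; rewrite -cnt_gt0 => ->.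
  + move=> e; rewrite mem_rcons in_cons size_rcons => /orP [/eqP -> /=|he].
      by rewrite /pos /= lp_rcons eqxx.
    by rewrite posE //; apply: ltnW; rewrite ltnS; apply: B; apply: remE.
-
  have posE e : e \in E w -> pos (rcons w a) e = pos w e.
    case: e => y [] he; rewrite /pos /=.
      rewrite lp_rcons; case: eqP => // ya; subst y.
      by move: he; rewrite MT; move/count_memPn: (negbT aw) => ->.
    by rewrite index_rcons -MF he.
  split.
  + apply: sorted_rcons_lt => [|e he].
      rewrite (@eq_in_sorted _ [in E w] _ (relw w)) //; last first.
        by move=> e1 e2 h1 h2; rewrite /relw !posE.
    by rewrite /relw posE // {2}/pos /= index_rcons aw eqxx; apply: B.
  + move=> x; rewrite mem_rcons in_cons MF mem_rcons in_cons xpair_eqE andbT.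
    by [].
  + move=> x; rewrite mem_rcons in_cons MT cnt_rcons xpair_eqE andbF /=.
    case: (a =P x) => [<-|_] /=; last by rewrite addn0.
    by move/count_memPn: (negbT aw) => ->.
  + move=> e; rewrite mem_rcons in_cons size_rcons => /orP [/eqP -> /=|he].
      by rewrite /pos /= index_rcons aw eqxx.
    by rewrite posE //; apply: ltnW; rewrite ltnS; apply: B.
Qed.

Lemma nseq_r (a : nat) k : nseq k a ++ [:: a] = nseq k.+1 a.
Proof. by elim: k => //= k ->. Qed.

Lemma rem_mid (T : eqType) (x : T) s1 s2 : x \notin s1 -> rem x (s1 ++ x :: s2) = s1 ++ s2.
Proof.
elim: s1 => /= [|y s1 IH]; first by rewrite eqxx.
rewrite in_cons negb_or => /andP [ne nx]; rewrite eq_sym (negbTE ne) IH //.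
Qed.

Lemma uniq_mid (T : eqType) (x : T) s1 s2 : uniq (s1 ++ x :: s2) -> x \notin s1 ++ s2.
Proof.
rewrite cat_uniq /= => /and3P [_ /norP [h1 _] /andP [h2 _]].
by rewrite mem_cat negb_or h1 h2.
Qed.

Lemma sorted_mid (T : eqType) (r : rel T) s1 x s2 : transitive r ->
  sorted r (s1 ++ x :: s2) -> forall y, y \in s2 -> r x y.
Proof.
move=> tr; rewrite sorted_pairwise // pairwise_cat /= => /and4P [_ _ /allP H _].
exact: H.
Qed.

Section Der.
Variables (m n : nat) (hm : 1 <= m) (hn : 2 <= n).

Notation D := (derivable (Ax6p5 m n)).

Definition cnorm k := if k < n then k else n + (k - n) %% m.
Definition k0 (w : seq nat) x := if 1 < count_mem x w then (cnorm (count_mem x w)).-1 else 1.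
Definition blk (w : seq nat) (e : nat * bool) : seq nat :=
  if e.2 then [:: e.1] else nseq (k0 w e.1) e.1.
Definition nf (w : seq nat) := flatten (map (blk w) (E w)).

Lemma D_pre w1 u v : D u v -> D (w1 ++ u) (w1 ++ v).
Proof. by move=> h; have := der_mul w1 [::] h; rewrite !cats0. Qed.

Definition sig3 (a : nat) (y z : word) : nat -> word :=
  fun i => if i == 1 then y else if i == 2 then z else [:: a].

Lemma sig3_ne a y z : y != [::] -> z != [::] -> forall i, sig3 a y z i != [::].
Proof. by move=> hy hz i; rewrite /sig3; case: ifP => // _; case: ifP. Qed.

Lemma wsubst_nseq a y z k : wsubst (sig3 a y z) (nseq k 0) = nseq k a.
Proof. by elim: k => //= k IH; rewrite /wsubst /= in IH *; rewrite IH. Qed.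

Lemma wsubst_cat s u v : wsubst s (u ++ v) = wsubst s u ++ wsubst s v.
Proof. by rewrite /wsubst map_cat flatten_cat. Qed.

Lemma G1 (a : nat) j Q R :
  D (nseq j.+1 a ++ Q ++ [:: a] ++ R ++ [:: a]) (nseq j.+2 a ++ Q ++ R ++ [:: a]).
Proof.
rewrite (_ : nseq j.+1 a ++ Q ++ [:: a] ++ R ++ [:: a] = [:: a] ++ (nseq j a ++ Q) ++ [:: a] ++ R ++ [:: a]); last by rewrite /= -!catA.
rewrite (_ : nseq j.+2 a ++ Q ++ R ++ [:: a] = [:: a; a] ++ (nseq j a ++ Q) ++ R ++ [:: a]); last by rewrite /= -!catA.
move: (nseq j a ++ Q) => Y.
case: (eqVneq Y [::]) => [->|hY]; first exact: der_refl.
case: (eqVneq R [::]) => [->|hR].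
  apply: der_sym.
  have := der_subst (sig3_ne a hY hY) (der_ax (ax3 m n)).
  by rewrite /wsubst /= /sig3 /= ?cats0.
have := der_subst (sig3_ne a hY hR) (der_ax (ax4 m n)).
by rewrite /wsubst /= /sig3 /= ?cats0.
Qed.

Lemma G2 (a : nat) Y :
  D (nseq (m + n - 1) a ++ Y ++ [:: a]) (nseq (n - 1) a ++ Y ++ [:: a]).
Proof.
case: (eqVneq Y [::]) => [->|hY].
  rewrite /= !nseq_r.
  have -> : (m + n - 1).+1 = m + n by lia.
  have -> : (n - 1).+1 = n by lia.
  have := der_subst (sig3_ne a (isT : [:: 0] != [::]) (isT : [:: 0] != [::])) (der_ax (ax1 m n)).
  by rewrite !wsubst_nseq.
have := der_subst (sig3_ne a hY hY) (der_ax (ax2 m n)).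
rewrite !wsubst_cat !wsubst_nseq /wsubst /= /sig3 /= ?cats0.
by [].
Qed.


Lemma cnorm_ge2 k : 2 <= k -> 2 <= cnorm k.
Proof. rewrite /cnorm; case: ifP => _; lia. Qed.

Lemma cnorm2 : cnorm 2 = 2.
Proof. rewrite /cnorm; case: ifP => h //; have -> : 2 - n = 0 by lia. rewrite mod0n; lia. Qed.

Lemma cnorm_succ k :
  (cnorm k.+1).-1 = cnorm k \/ (cnorm k = m + n - 1 /\ (cnorm k.+1).-1 = n - 1).
Proof.
rewrite /cnorm.
case: (ltnP k.+1 n) => h1.
  by rewrite (ltnW h1); left.
case: (ltnP k n) => h2.
  have -> : k.+1 = n by lia.
  rewrite subnn mod0n addn0; left; lia.
have -> : k.+1 - n = (k - n) + 1 by lia.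
rewrite -modnDml.
have := ltn_pmod (k - n) hm.
move: ((k - n) %% m) => r hr.
case: (ltnP r.+1 m) => h3.
  rewrite addn1 modn_small //; left; lia.
have -> : r + 1 = m by lia.
rewrite modnn; right; lia.
Qed.

Lemma core (a : nat) k Q R : 2 <= k ->
  D (nseq (cnorm k).-1 a ++ Q ++ [:: a] ++ R ++ [:: a]) (nseq (cnorm k.+1).-1 a ++ Q ++ R ++ [:: a]).
Proof.
move=> hk; have := cnorm_ge2 hk.
have := cnorm_succ k.
move: (cnorm k) (cnorm k.+1) => c c' H hc.
have -> : c.-1 = (c - 2).+1 by lia.
apply: der_trans (G1 _ _ _ _) _.
have e : (c - 2).+2 = c by lia.
rewrite e.
case: H => [->|[hc1 ->]]; first exact: der_refl.
rewrite hc1.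
have -> : Q ++ R ++ [:: a] = (Q ++ R) ++ [:: a] by rewrite catA.
exact: G2.
Qed.


Lemma blk_eq w a e : e.1 != a -> blk (rcons w a) e = blk w e.
Proof.
by move=> ne; rewrite /blk /k0 cnt_rcons eq_sym (negbTE ne) addn0.
Qed.

Lemma flatten_rcons (T : Type) (s : seq (seq T)) x : flatten (rcons s x) = flatten s ++ x.
Proof. by rewrite -cats1 flatten_cat /= cats0. Qed.

Lemma der_step w a : D (nf w ++ [:: a]) (nf (rcons w a)).
Proof.
have [So MF MT B] := E_prop w.
have U := sorted_uniq (@relw_tr w) (@relw_irr w) So.
rewrite /nf E_rcons; case: ifP => aw.
  case: (ltnP 1 (count_mem a w)) => c2.
    have hT : (a, true) \in E w by rewrite MT.
    have hF : (a, false) \in E w by rewrite MF.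
    have [p1 [p2 EE]] : exists p1 p2, E w = p1 ++ (a, true) :: p2.
      by case/splitPr: hT => p1 p2; exists p1, p2.
    have hF1 : (a, false) \in p1.
      move: hF; rewrite EE mem_cat in_cons xpair_eqE andbF /= => /orP [//|h2].
      have So2 := So; rewrite EE in So2; have := sorted_mid (@relw_tr w) So2 h2.
      rewrite /relw /pos /=.
      have [h _] := index_lp aw.
      by move: h; rewrite leqNgt => /negbTE ->.
    have [q1 [q2 EP]] : exists q1 q2, p1 = q1 ++ (a, false) :: q2.
      by case/splitPr: hF1 => q1 q2; exists q1, q2.
    rewrite EE EP in U *.
    have U1 : (a, true) \notin (q1 ++ (a, false) :: q2) ++ p2 by apply: uniq_mid.
    have U2 : (a, false) \notin q1 ++ (q2 ++ (a, true) :: p2).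
      by apply: uniq_mid; move: U; rewrite -catA.
    have eqF s : {subset s <= q1 ++ q2 ++ p2} -> map (blk (rcons w a)) s = map (blk w) s.
      move=> sub; apply/eq_in_map => -[y b] /sub he; apply: blk_eq => /=.
      apply/eqP => ya; subst y; case: b he => he.
        move: U1; rewrite !mem_cat in_cons => /negP; apply.
        by move: he; rewrite !mem_cat => /or3P [] ->; rewrite ?orbT.
      move: U2; rewrite !mem_cat in_cons => /negP; apply.
      by move: he; rewrite !mem_cat => /or3P [] ->; rewrite ?orbT.
    rewrite rem_mid; last by move: U1; rewrite !mem_cat negb_or => /andP [].
    rewrite map_rcons flatten_rcons !map_cat !flatten_cat /=.
    rewrite (eqF q1) ?(eqF q2) ?(eqF p2); try by move=> e he; rewrite !mem_cat he ?orbT.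
    rewrite /blk /k0 /= cnt_rcons eqxx c2 addn1 ltnW //.
    rewrite -!catA; apply: D_pre.
    exact: core.
  have nT : (a, true) \notin E w by rewrite MT -leqNgt.
  rewrite rem_id // map_rcons flatten_rcons.
  have c1 : count_mem a w = 1 by move: aw c2; rewrite -cnt_gt0; lia.
  have -> : map (blk (rcons w a)) (E w) = map (blk w) (E w).
    apply/eq_in_map => -[y b] he.
    case: (eqVneq y a) => [ya|ne]; last exact: blk_eq.
    subst y; case: b he => he; first by rewrite he in nT.
    by rewrite /blk /k0 /= cnt_rcons eqxx c1 /= cnorm2.
  exact: der_refl.
rewrite map_rcons flatten_rcons.
have -> : map (blk (rcons w a)) (E w) = map (blk w) (E w).
  apply/eq_in_map => -[y b] he; apply: blk_eq => /=.
  apply/eqP => ya; subst y; case: b he => he.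
    by move: he; rewrite MT; move/count_memPn: (negbT aw) => ->.
  by move: he; rewrite MF aw.
rewrite /blk /k0 /= cnt_rcons eqxx; move/count_memPn: (negbT aw) => -> /=.
exact: der_refl.
Qed.

Lemma der_nf w : D w (nf w).
Proof.
elim/last_ind: w => [|w a IH]; first exact: der_refl.
apply: der_trans (der_step w a).
have := der_mul [::] [:: a] IH; by rewrite /= !cats1.
Qed.

End Der.

Section Inv.
Variables (m n : nat) (hm : 1 <= m) (hn : 2 <= n).
Notation S := (S6p5 m n).
Notation opS := (@S6p5_op m n).

Lemma sat_proj (C : Type) (opC : C -> C -> C) (f : S -> C) (e : C -> S) u v :
  (forall a b, f (opS a b) = opC (f a) (f b)) -> (forall c, f (e c) = c) ->
  satisfies opS u v -> satisfies opC u v.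
Proof.
move=> hf hfe H psi.
rewrite !(@evalw_ext _ opC psi (fun x => f (e (psi x)))); try by move=> x; rewrite hfe.
have := congr1 (omap f) (H (fun x => e (psi x))).
by rewrite -!(@evalw_hom _ opS _ opC f (fun x => e (psi x)) _ hf).
Qed.

Definition z0 : 'I_m := Ordinal hm.

Lemma satZ u v : satisfies opS u v -> satisfies (@Zm_op m) u v.
Proof.
apply: (@sat_proj _ _ (fun s => s.1.1.1.1) (fun c => (c, None, None, None, None))) => //.
by move=> [[[[? ?] ?] ?] ?] [[[[? ?] ?] ?] ?].
Qed.
Lemma satN u v : satisfies opS u v -> satisfies (adjI (@Nn_op n)) u v.
Proof.
apply: (@sat_proj _ _ (fun s => s.1.1.1.2) (fun c => (z0, c, None, None, None))) => //.
by move=> [[[[? ?] ?] ?] ?] [[[[? ?] ?] ?] ?].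
Qed.
Lemma satL u v : satisfies opS u v -> satisfies (adjI L2_op) u v.
Proof.
apply: (@sat_proj _ _ (fun s => s.1.1.2) (fun c => (z0, None, c, None, None))) => //.
by move=> [[[[? ?] ?] ?] ?] [[[[? ?] ?] ?] ?].
Qed.
Lemma satR u v : satisfies opS u v -> satisfies (adjI R2_op) u v.
Proof.
apply: (@sat_proj _ _ (fun s => s.1.2) (fun c => (z0, None, None, c, None))) => //.
by move=> [[[[? ?] ?] ?] ?] [[[[? ?] ?] ?] ?].
Qed.
Lemma satA u v : satisfies opS u v -> satisfies (adjI A0_op) u v.
Proof.
apply: (@sat_proj _ _ (fun s => s.2) (fun c => (z0, None, None, None, c))) => //.
by move=> [[[[? ?] ?] ?] ?] [[[[? ?] ?] ?] ?].
Qed.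

Lemma sat_P (C : Type) (opC : C -> C -> C) (phi : nat -> C) (P : seq nat -> C -> Prop) u v :
  satisfies opC u v -> u != [::] ->
  (forall a, P [:: a] (phi a)) ->
  (forall s a t, s != [::] -> P s t -> P (rcons s a) (opC t (phi a))) ->
  exists t, P u t /\ P v t.
Proof.
move=> H nu h0 hS.
case E1: (evalw opC phi u) => [t|]; last by move: nu E1; clear H; case: u.
exists t; split; first exact: (evalw_P h0 hS E1).
by apply: (evalw_P h0 hS); rewrite -H.
Qed.

Lemma invZ u v x : satisfies opS u v -> u != [::] -> count_mem x u %% m = count_mem x v %% m.
Proof.
move/satZ=> H nu.
have [t [h1 h2]] : exists t : 'I_m, val t = count_mem x u %% m /\ val t = count_mem x v %% m.
  apply: (@sat_P _ _ (fun y => Ordinal (ltn_pmod (y == x) hm))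
    (fun w (t : 'I_m) => val t = count_mem x w %% m) _ _ H nu).
  - by move=> a /=; rewrite addn0.
  - by move=> s a t' _ /= IH; rewrite IH cnt_rcons modnDm.
by rewrite -h1 -h2.
Qed.

Lemma invN u v x : satisfies opS u v -> u != [::] -> minn (count_mem x u) n = minn (count_mem x v) n.
Proof.
move/satN=> H nu.
have [t [h1 h2]] : exists t : option 'I_n, gN t = minn (count_mem x u) n /\ gN t = minn (count_mem x v) n.
  apply: (@sat_P (option 'I_n) (adjI (@Nn_op n)) (fun y => if y == x then Some (Ordinal (ltnW hn)) else None)
    (fun w t => gN t = minn (count_mem x w) n) _ _ H nu).
  - by move=> a /=; case: (a == x) => /=; lia.
  - move=> s a t' _ IH; rewrite gN_op IH cnt_rcons.
    by case: (a == x) => /=; lia.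
by rewrite -h1 -h2.
Qed.

End Inv.

Section InvL.
Variables (x z : nat) (xz : x != z).

Definition psiL (a : nat) : option bool := if a == x then Some true else if a == z then Some false else None.
Definition Lval (w : seq nat) : option bool :=
  if (x \in w) || (z \in w) then Some (index x w < index z w) else None.

Lemma Lval1 a : psiL a = Lval [:: a].
Proof.
rewrite /psiL /Lval !mem_seq1 /=.
have zx : (z == x) = false by rewrite eq_sym (negbTE xz).
case: (a =P x) => [->|nx]; first by rewrite eqxx zx (negbTE xz).
case: (a =P z) => [->|nz]; first by rewrite eqxx (negbTE xz).
by rewrite eq_sym; case: eqP => // _; rewrite eq_sym; case: eqP.
Qed.

Lemma adjL_some b q : adjI L2_op (Some b) q = Some b.
Proof. by case: q. Qed.

Lemma LvalS s a : adjI L2_op (Lval s) (psiL a) = Lval (rcons s a).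
Proof.
rewrite /Lval !mem_rcons !in_cons !index_rcons.
have ix := index_mem x s; have iz := index_mem z s.
case hx: (x \in s).
  rewrite orbT adjL_some; congr Some.
  case hz: (z \in s) => //.
  rewrite (memNindex (negbT hz)); rewrite hx in ix; rewrite ix.
  by case: (z == a); rewrite ?ix // ltnS ltnW.
case hz: (z \in s).
  rewrite !orbT adjL_some; congr Some.
  rewrite (memNindex (negbT hx)); rewrite hz in iz.
  have h : index z s < size s by rewrite iz.
  rewrite !ltnNge (ltnW h); case: (x == a).
    by rewrite (ltnW h).
  by rewrite (leqW (ltnW h)).
have zx : (z == x) = false by rewrite eq_sym (negbTE xz).
rewrite /psiL !orbF; case: (a =P x) => [->|nx].
  by rewrite eqxx zx /= ltnSn.
case: (a =P z) => [->|nz].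
  by rewrite (negbTE xz) eqxx /= ltnNge leqnSn.
have -> : (x == a) = false by apply/eqP => e; apply: nx.
have -> : (z == a) = false by apply/eqP => e; apply: nz.
by [].
Qed.

Definition Rval (w : seq nat) : option bool :=
  if (x \in w) || (z \in w) then Some ((x \in w) && ((z \in w) ==> (lp z w < lp x w))) else None.

Lemma Rval1 a : psiL a = Rval [:: a].
Proof.
rewrite /psiL /Rval !mem_seq1 /=.
have zx : (z == x) = false by rewrite eq_sym (negbTE xz).
case: (a =P x) => [->|nx]; first by rewrite eqxx zx.
case: (a =P z) => [->|nz]; first by rewrite eqxx (negbTE xz).
by rewrite eq_sym; case: eqP => // _; rewrite eq_sym; case: eqP.
Qed.

Lemma adjR_some q b : adjI R2_op q (Some b) = Some b.
Proof. by case: q. Qed.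

Lemma RvalS s a : adjI R2_op (Rval s) (psiL a) = Rval (rcons s a).
Proof.
have zx : (z == x) = false by rewrite eq_sym (negbTE xz).
rewrite /Rval !mem_rcons !in_cons !lp_rcons /psiL.
case: (a =P x) => [->|nx].
  rewrite eqxx zx adjR_some /=; congr Some.
  by case hz: (z \in s) => //=; rewrite lp_lt.
case: (a =P z) => [->|nz].
  rewrite eqxx (negbTE xz) adjR_some /= orbT; congr Some.
  by case hx: (x \in s) => //=; rewrite ltnNge ltnW // lp_lt.
have -> : (x == a) = false by apply/eqP => e; apply: nx.
have -> : (z == a) = false by apply/eqP => e; apply: nz.
by case: ifP.
Qed.

Definition psiA (a : nat) : option A0 := if a == x then Some A0e else if a == z then Some A0f else None.
Definition Aval (w : seq nat) : option A0 :=
  if (x \in w) || (z \in w) then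
    Some (if (z \in w) && (index x w < lp z w) then A0zero
          else if (x \in w) && (z \in w) then A0fe else if x \in w then A0e else A0f)
  else None.

Lemma Aval1 a : psiA a = Aval [:: a].
Proof.
rewrite /psiA /Aval !mem_seq1 /=.
have zx : (z == x) = false by rewrite eq_sym (negbTE xz).
case: (a =P x) => [->|nx]; first by rewrite eqxx zx.
case: (a =P z) => [->|nz]; first by rewrite eqxx (negbTE xz).
have -> : (x == a) = false by apply/eqP => e; apply: nx.
by have -> : (z == a) = false by apply/eqP => e; apply: nz.
Qed.

Lemma AvalS s a : adjI A0_op (Aval s) (psiA a) = Aval (rcons s a).
Proof.
rewrite /Aval !mem_rcons !in_cons !lp_rcons !index_rcons /psiA.
have ix := index_mem x s; have lz := @lp_lt z s.
have nix := @memNindex _ x s.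
have zx : (z == x) = false by rewrite eq_sym (negbTE xz).
case: (a =P x) => [->|nx].
  rewrite eqxx zx /=.
  case hx: (x \in s); case hz: (z \in s) => /=.
  - by case: ifP.
  - by [].
  - have hl := lz hz; by rewrite nix ?hx // ltnNge (ltnW hl).
  - by [].
case: (a =P z) => [->|nz].
  rewrite eqxx (negbTE xz) /= orbT.
  case hx: (x \in s); case hz: (z \in s) => /=.
  - by rewrite ix hx; case: ifP.
  - by rewrite ix hx.
  - have hl := lz hz.
    have f1 : (size s < lp z s) = false by rewrite ltnNge (ltnW hl).
    have f2 : ((size s).+1 < size s) = false by rewrite ltnNge leqnSn.
    by rewrite nix ?hx // f1 f2.
  - have f2 : ((size s).+1 < size s) = false by rewrite ltnNge leqnSn.
    by rewrite f2.
have -> : (x == a) = false by apply/eqP => e; apply: nx.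
have -> : (z == a) = false by apply/eqP => e; apply: nz.
case hx: (x \in s); case hz: (z \in s) => //=.
have hl := lz hz.
have f1 : (size s < lp z s) = false by rewrite ltnNge (ltnW hl).
have f3 : ((size s).+1 < lp z s) = false by rewrite ltnNge ltnW // ltnW.
by rewrite nix ?hx // f1 f3.
Qed.

End InvL.

Lemma mem_E w e : e \in E w -> e.1 \in w.
Proof.
have [_ MF MT _] := E_prop w.
case: e => y [] /=; first by rewrite MT -cnt_gt0; apply: ltnW.
by rewrite MF.
Qed.

Section Main.
Variables (m n : nat) (hm : 1 <= m) (hn : 2 <= n).
Notation opS := (@S6p5_op m n).

Lemma invL' u v x z : x != z -> satisfies opS u v -> u != [::] -> Lval x z u = Lval x z v.
Proof.
move=> xz /(satL hm) H nu.
have [t [h1 h2]] : exists t, t = Lval x z u /\ t = Lval x z v.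
  apply: (@sat_P _ _ (psiL x z) (fun w t => t = Lval x z w) _ _ H nu).
  - exact: Lval1 xz.
  - by move=> s a t _ ->; exact: LvalS.
by rewrite -h1 -h2.
Qed.

Lemma invR' u v x z : x != z -> satisfies opS u v -> u != [::] -> Rval x z u = Rval x z v.
Proof.
move=> xz /(satR hm) H nu.
have [t [h1 h2]] : exists t, t = Rval x z u /\ t = Rval x z v.
  apply: (@sat_P _ _ (psiL x z) (fun w t => t = Rval x z w) _ _ H nu).
  - exact: Rval1 xz.
  - by move=> s a t _ ->; exact: RvalS.
by rewrite -h1 -h2.
Qed.

Lemma invA' u v x z : x != z -> satisfies opS u v -> u != [::] -> Aval x z u = Aval x z v.
Proof.
move=> xz /(satA hm) H nu.
have [t [h1 h2]] : exists t, t = Aval x z u /\ t = Aval x z v.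
  apply: (@sat_P _ _ (psiA x z) (fun w t => t = Aval x z w) _ _ H nu).
  - exact: Aval1 xz.
  - by move=> s a t _ ->; exact: AvalS.
by rewrite -h1 -h2.
Qed.

Lemma cnorm_eq a b : a %% m = b %% m -> minn a n = minn b n -> cnorm m n a = cnorm m n b.
Proof.
move=> h1 h2; rewrite /cnorm.
case: (ltnP a n) => ha.
  have hb : b = a by lia.
  by rewrite hb ha.
have hb : n <= b by lia.
rewrite ltnNge hb /=; congr addn.
apply/eqP; rewrite -(eqn_modDr n) !subnK //; exact/eqP.
Qed.

Lemma nf_eq u v : satisfies opS u v -> u != [::] -> nf m n u = nf m n v.
Proof.
move=> H nu.
have cnt x : minn (count_mem x u) n = minn (count_mem x v) n by exact: (invN hm hn x H nu).
have mem x : (x \in u) = (x \in v).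
  by rewrite -!cnt_gt0; have := cnt x; move=> h; apply/idP/idP; lia.
have two x : (1 < count_mem x u) = (1 < count_mem x v).
  by have := cnt x; move=> h; apply/idP/idP; lia.
have cn x : cnorm m n (count_mem x u) = cnorm m n (count_mem x v).
  by apply: cnorm_eq; [exact: (invZ hm x H nu) | exact: cnt].
have [Su MFu MTu Bu] := E_prop u.
have [Sv MFv MTv Bv] := E_prop v.
have memE : E u =i E v.
  by move=> [y []]; rewrite ?MTu ?MTv ?MFu ?MFv.
have key : {in [in E v] &, subrel (relw v) (relw u)}.
  move=> [x b] [z c] ha hb.
  have xv : x \in v := mem_E ha.
  have zv : z \in v := mem_E hb.
  have xu : x \in u by rewrite mem.
  have zu : z \in u by rewrite mem.
  rewrite /relw /pos /=.
  case: (eqVneq x z) => [exz|nxz].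
    subst z; case: b c ha hb => -[] ha hb //=; rewrite ?ltnn //.
      by have [h _] := index_lp xv; rewrite ltnNge h.
    move=> _; apply: (index_lp xu).2; rewrite two -MTv; exact: hb.
  case: b c ha hb => -[] ha hb.
  - have := invR' (z := x) (x := z) (negbT (introF eqP (fun e => (negP nxz) (introT eqP (esym e))))) H nu.
    by rewrite /Rval xu zu xv zv /= => -[->].
  - have zx : z != x by rewrite eq_sym.
    have := invA' zx H nu; rewrite /Aval xu zu xv zv /= => h hv.
    have f : (index z v < lp x v) = false by rewrite ltnNge ltnW.
    rewrite f in h.
    have g : (index z u < lp x u) = false by move: h; case: (index z u < lp x u).
    rewrite ltn_neqAle leqNgt g andbT.
    apply/eqP => e.
    by move/eqP: zx; apply; rewrite -(nth_index 0 zu) -e nth_lp.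
  - have := invA' nxz H nu; rewrite /Aval xu zu xv zv /= => h hv.
    by rewrite hv in h; move: h; case: (index x u < lp z u).
  - have := invL' nxz H nu.
    by rewrite /Lval xu zu xv zv /= => -[->].
have EE : E u = E v.
  apply: (irr_sorted_eq (@relw_tr u) (@relw_irr u)) => //.
  by apply: (sub_in_sorted key) => //; exact: allss.
rewrite /nf EE; congr flatten; apply: eq_map => -[y b].
by rewrite /blk /k0 two cn.
Qed.

End Main.

Theorem proposition6p5 (m n : nat) (hm : 1 <= m) (hn : 2 <= n) :
  forall u v : word, u != [::] -> v != [::] ->
    (satisfies (@S6p5_op m n) u v <-> derivable (Ax6p5 m n) u v).
Proof.
move=> u v nu nv; split.
  move=> H; apply: der_trans (der_nf hm hn u) _.
  rewrite (nf_eq hm hn H nu); apply: der_sym; exact: der_nf.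
exact: der_sound.
Qed.
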